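(* Let $d\ge 1$, $\sigma>0$, and let $A_0,A_1\in\mathbb{R}^{d\times d}$ be constant matrices (not assumed to commute). Let $Z:\mathbb{R}\to\mathbb{R}^{d\times d}$ be the function defined in the context. Then \[ \dot Z(\vartheta)=A_0Z(\vartheta-\sigma)+Z(\vartheta-\sigma)A_1\qquad\text{for all }\vartheta\in(-\infty,\infty), \] where at the points $\vartheta=k\sigma$, $k\in\{-1,0,1,2,\dots\}$, the derivative $\dot Z(\vartheta)$ is understood as the right-hand derivative.
   Context: $\Theta$ and $I$ denote the $d\times d$ zero and identity matrices. Define matrices $Q_{r+1}(r\sigma)$, $r=0,1,2,\dots$, recursively by $Q_1(0)=I$ and $Q_{r+1}(r\sigma)=A_0Q_r((r-1)\sigma)+Q_r((r-1)\sigma)A_1$ for $r\ge 1$. Define $Z:\mathbb{R}\to\mathbb{R}^{d\times d}$ by $Z(\vartheta)=\Theta$ for $\vartheta<-\sigma$, and, for each integer $u\ge 0$ and $\vartheta\in[(u-1)\sigma,u\sigma)$, \[ Z(\vartheta)=\sum_{r=0}^{u}Q_{r+1}(r\sigma)\frac{(\vartheta-(r-1)\sigma)^r}{r!} \] (so $Z(\vartheta)=I$ on $[-\sigma,0)$, $Z(\vartheta)=I+Q_2(\sigma)\vartheta$ on $[0,\sigma)$, etc.). *)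

(* Defs.v *)
From HB Require Import structures.
From mathcomp Require Import all_boot all_order all_algebra.
From mathcomp Require Import all_classical all_reals all_analysis.
Set Implicit Arguments. Unset Strict Implicit. Unset Printing Implicit Defensive.
Import Order.TTheory GRing.Theory Num.Theory.
Import numFieldNormedType.Exports.
Local Open Scope ring_scope.

(* Qmat A0 A1 r  represents  Q_{r+1}(r sigma) of the paper:
   Q_1(0) = I,  Q_{r+1}(r sigma) = A0 Q_r((r-1)sigma) + Q_r((r-1)sigma) A1. *)
Fixpoint Qmat (R : ringType) (d : nat) (A0 A1 : 'M[R]_d) (r : nat) : 'M[R]_d :=
  match r with
  | 0 => 1%:M
  | r'.+1 => A0 *m Qmat A0 A1 r' + Qmat A0 A1 r' *m A1
  end.

(* Main.v *)
Require Import Defs.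
From HB Require Import structures.
From mathcomp Require Import all_boot all_order all_algebra.
From mathcomp Require Import all_classical all_reals all_analysis.
From mathcomp Require Import ring lra.
Import Order.TTheory GRing.Theory Num.Theory.
Import numFieldNormedType.Exports.
Local Open Scope ring_scope.
Local Open Scope classical_set_scope.
Section S.
Variable R : realType.
Variable d : nat.

Lemma is_derive_scal_mx (g : R -> R) (t dg : R) (M : 'M[R]_d) :
  is_derive t 1 g dg -> is_derive t 1 (fun x => g x *: M) (dg *: M).
Proof.
move=> [dg1 <-].
have H : (fun h : R => h^-1 *: ((fun x => g x *: M) (h *: 1 + t) - g t *: M)) @ 0^' --> 'D_1 g t *: M.
  have -> : (fun h : R => h^-1 *: ((fun x => g x *: M) (h *: 1 + t) - g t *: M)) =
     (fun h => (h^-1 *: (g (h *: 1 + t) - g t)) *: M).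
    by apply/funext => h /=; rewrite -scalerBl scalerA.
  apply: cvgZr_tmp.
  exact: dg1.
apply: DeriveDef; first by apply/cvg_ex; eexists; exact: H.
exact: cvg_lim H.
Qed.

Lemma derF (c k : R) r (t : R) :
  is_derive t 1 (fun x => (x - c)^+r * k) ((r%:R * (t-c)^+r.-1) * k).
Proof.
have h1 : is_derive t 1 (shift (-c)) 1 := is_derive_shift _ _ _.
have h2 := is_deriveX r h1.
have h3 := is_deriveZ k h2.
have -> : (fun x => (x - c)^+r * k) = k \*: (shift (-c))^+r.
  by apply/funext => x /=; rewrite mulrC exprfctE.
have E : k *: (r%:R * (t - c)^+r.-1)%:A = r%:R * (t - c) ^+ r.-1 * k.
  by rewrite scalerA /GRing.scale /= mulr1 mulrC.
by rewrite -E.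
Qed.

Variables (sigma : R) (A0 A1 : 'M[R]_d).
Definition Fm (r : nat) (x : R) : R := (x - (r%:R - 1) * sigma) ^+ r / (r`!)%:R.
Definition dF (r : nat) (t : R) : R := if r is s.+1 then Fm s (t - sigma) else 0.
Definition P (u : nat) (x : R) : 'M[R]_d := \sum_(r < u.+1) (Fm r x *: Qmat A0 A1 r).

Lemma derFm r (t : R) : is_derive t 1 (Fm r) (dF r t).
Proof.
have := derF ((r%:R - 1) * sigma) (r`!)%:R^-1 r t.
case: r => [|r].
  rewrite (_ : (0%:R : R) = 0) // !mul0r; move=> H; exact: H.
rewrite /dF /Fm /=.
have -> : r.+1%:R * (t - (r.+1%:R - 1) * sigma) ^+ r * (r.+1`!)%:R^-1
   = (t - sigma - (r%:R - 1) * sigma) ^+ r / (r`!)%:R.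
  rewrite factS natrM -addn1 natrD /=.
  have h1 : (r%:R + 1 : R) != 0 by rewrite natr1 pnatr_eq0.
  have h2 : ((r`!)%:R : R) != 0 by rewrite pnatr_eq0 -lt0n fact_gt0.
  have -> : (t - (r%:R + 1 - 1) * sigma) = (t - sigma - (r%:R - 1) * sigma) by ring.
  by field; rewrite h1 h2.
by move=> H; exact: H.
Qed.

Lemma derPgen u (t : R) :
  is_derive t 1 (P u) (\sum_(r < u.+1) (dF r t *: Qmat A0 A1 r)).
Proof.
have -> : P u = \sum_(r < u.+1) (fun x => Fm r x *: Qmat A0 A1 r).
  by rewrite fct_sumE; apply/funext => x.
apply: is_derive_sum => r.
exact: is_derive_scal_mx (derFm r t).
Qed.

Lemma derP0 (t : R) : is_derive t 1 (P 0) 0.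
Proof.
have := derPgen 0 t.
by rewrite big_ord1 /= scale0r.
Qed.

Lemma derPS u (t : R) :
  is_derive t 1 (P u.+1) (A0 *m P u (t - sigma) + P u (t - sigma) *m A1).
Proof.
have := derPgen u.+1 t.
rewrite big_ord_recl /= scale0r add0r.
suff -> : \sum_(i < u.+1) dF (bump 0 i) t *: Qmat A0 A1 (bump 0 i) =
   A0 *m P u (t - sigma) + P u (t - sigma) *m A1 by [].
rewrite /P mulmx_sumr mulmx_suml -big_split /=.
apply: eq_bigr => i _.
by rewrite /bump /= add0n scalerDr scalemxAr scalemxAl.
Qed.
End S.

Arguments P {R d}.

Theorem theorem1 (R : realType) (d : nat) (hd : (0 < d)%N) (sigma : R)
  (hsigma : 0 < sigma) (A0 A1 : 'M[R]_d) (Z : R -> 'M[R]_d)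
  (HZneg : forall t, t < - sigma -> Z t = 0)
  (HZu : forall (u : nat) (t : R),
      (u%:R - 1) * sigma <= t -> t < u%:R * sigma ->
      Z t = \sum_(r < u.+1)
              (((t - (r%:R - 1) * sigma) ^+ r / (r`!)%:R) *: Qmat A0 A1 r)) :
  (* right-hand derivative at every point *)
  (forall t : R,
      (fun h : R => h^-1 *: (Z (t + h) - Z t)) @ 0^'+ -->
        (A0 *m Z (t - sigma) + Z (t - sigma) *m A1))
  /\
  (* ordinary two-sided derivative away from the points k sigma, k >= -1 *)
  (forall t : R, (forall k : int, (-1 <= k)%R -> t != k%:~R * sigma) ->
      derivable Z t 1 /\
      'D_1 Z t = A0 *m Z (t - sigma) + Z (t - sigma) *m A1).
Proof.
have HZP : forall u t, (u%:R - 1) * sigma <= t -> t < u%:R * sigma ->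
    Z t = P sigma A0 A1 u t by exact: HZu.
have Hcase : forall t, t < - sigma \/
    exists u : nat, (u%:R - 1) * sigma <= t /\ t < u%:R * sigma.
  move=> t; case: (ltP t (- sigma)) => ht; [by left | right].
  set y := t / sigma.
  have ty : t = y * sigma by rewrite /y divfK // gt_eqF.
  have h0 : 0 <= y + 1.
    have : - sigma <= y * sigma by rewrite -ty.
    nra.
  exists (Num.truncn (y + 1)); move: (truncn_itv h0) => /andP[h1 h2].
  rewrite -natr1 in h2.
  rewrite ty; split; nra.
have Hder : forall u t, (u%:R - 1) * sigma <= t -> t < u%:R * sigma ->
    is_derive t 1 (P sigma A0 A1 u) (A0 *m Z (t - sigma) + Z (t - sigma) *m A1).
  case=> [|u] t h1 h2.
    rewrite HZneg; first by rewrite mulmx0 mul0mx addr0; exact: derP0.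
    by rewrite mul0r in h2; lra.
  rewrite (HZP u (t - sigma)); first exact: derPS.
    by rewrite -natr1 in h1; nra.
  by rewrite -natr1 in h2; nra.
split.
- move=> t; case: (Hcase t) => [ht | [u [h1 h2]]].
    have -> : Z (t - sigma) = 0 by apply: HZneg; lra.
    rewrite mulmx0 mul0mx addr0.
    apply: (@cvg_trans _ ((fun _ : R => (0 : 'M[R]_d)) @ 0^'+)); last exact: cvg_cst.
    apply: near_eq_cvg; near=> h.
    have hh : h < - sigma - t by near: h; apply: nbhs_right_lt; lra.
    by rewrite /= !HZneg ?subrr ?scaler0 //; lra.
  have [dv dval] := Hder u t h1 h2.
  have C : (fun h : R => h^-1 *: ((P sigma A0 A1 u \o shift t) (h *: 1) - P sigma A0 A1 u t))
      @ 0^' --> (A0 *m Z (t - sigma) + Z (t - sigma) *m A1).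
    by rewrite -dval; exact: dv.
  have C' : (fun h : R => h^-1 *: ((P sigma A0 A1 u \o shift t) (h *: 1) - P sigma A0 A1 u t))
      @ 0^'+ --> (A0 *m Z (t - sigma) + Z (t - sigma) *m A1).
    move=> A /C /nbhs_ballP [_ /posnumP[e] xe_A].
    by exists e%:num => //= y xe_y /gt_eqF/negbT/xe_A; exact.
  apply: cvg_trans C'; apply: near_eq_cvg; near=> h.
  have hp : 0 < h by near: h; apply: nbhs_right_gt.
  have hh : h < u%:R * sigma - t by near: h; apply: nbhs_right_lt; lra.
  rewrite /= (HZP u t) // (HZP u (t + h)); [|lra|lra].
  have -> : h%:A = h by rewrite /GRing.scale /= mulr1.
  by rewrite (addrC h t).
- move=> t ht.
  suff D : is_derive t 1 Z (A0 *m Z (t - sigma) + Z (t - sigma) *m A1).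
    by split; [exact: ex_derive | exact: derive_val].
  case: (Hcase t) => [ht' | [u [h1 h2]]].
    have -> : Z (t - sigma) = 0 by apply: HZneg; lra.
    rewrite mulmx0 mul0mx addr0.
    apply: (near_eq_is_derive _ (is_derive_cst (0 : 'M[R]_d) t 1)).
    have Ht : t \in `](t - 1), (- sigma)[%R by rewrite in_itv /=; apply/andP; split; lra.
    have Hn := near_in_itvoo Ht.
    near=> x.
    have : x \in `](t - 1), (- sigma)[%R by near: x.
    rewrite in_itv /= => /andP[_ hx].
    by rewrite HZneg.
  have h1' : (u%:R - 1) * sigma < t.
    rewrite lt_neqAle h1 andbT.
    have := ht (u%:Z - 1); rewrite intrB /= eq_sym; apply.
    by rewrite lerBrDr addNr.
  apply: (near_eq_is_derive _ (Hder u t h1 h2)).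
  have Ht : t \in `]((u%:R - 1) * sigma), (u%:R * sigma)[%R.
    by rewrite in_itv /=; apply/andP; split.
  have Hn := near_in_itvoo Ht.
  near=> x.
  have : x \in `]((u%:R - 1) * sigma), (u%:R * sigma)[%R by near: x.
  rewrite in_itv /= => /andP[hx1 hx2].
  by rewrite (HZP u x) // ltW.
Unshelve. all: by end_near.
Qed.
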